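(* Let $V_0,V_1,V'_1,V'_2,V'_3,\ldots$ be vector bundles and let $$V_0\xrightarrow{K'_0}V'_1\xrightarrow{K'_1}V'_2\xrightarrow{K'_2}V'_3\xrightarrow{K'_3}V'_4\xrightarrow{K'_4}\cdots$$ be a full compatibility complex of differential operators. Let $K_0\colon V_0\to V_1$, $C_1\colon V_1\to V'_1$, $D_1\colon V'_1\to V_1$, $H'_1\colon V'_2\to V'_1$ be differential operators such that $C_1\circ K_0=K'_0$, $D_1\circ K'_0=K_0$ (i.e. the first square with $C_0=D_0=\mathrm{id}$, $H_0=H'_0=0$ is an equivalence up to homotopy), and $$\mathrm{id}-C_1\circ D_1=H'_1\circ K'_1 .$$ Define $K_1\colon V_1\to V_1\oplus V'_2$, $K_1=\bigl(\mathrm{id}-D_1C_1,\ K'_1C_1\bigr)$; $K_2\colon V_1\oplus V'_2\to V'_1\oplus V'_3$, $K_2(x,y)=\bigl(C_1x-H'_1y,\ K'_2y\bigr)$; $K_3\colon V'_1\oplus V'_3\to V'_4$, $K_3(x,y)=K'_3y$; and $K_l=K'_l\colon V'_l\to V'_{l+1}$ for $l\ge4$. Then $K_0,K_1,K_2,\ldots$ is a full compatibility complex for $K_0$. Moreover, together with the vertical maps $C_0=D_0=\mathrm{id}$, $C_1$, $D_1$, $C_2=(0\ \mathrm{id})\colon V_1\oplus V'_2\to V'_2$, $D_2=\bigl(D_1H'_1,\ \mathrm{id}-K'_1H'_1\bigr)\colon V'_2\to V_1\oplus V'_2$, $C_3=(0\ \mathrm{id})\colon V'_1\oplus V'_3\to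 V'_3$, $D_3=(0,\mathrm{id})\colon V'_3\to V'_1\oplus V'_3$, $C_l=D_l=\mathrm{id}$ for $l\ge4$, and homotopies $H_0=H'_0=0$, $H_1=(\mathrm{id}\ 0)\colon V_1\oplus V'_2\to V_1$, $H'_1$ as given, $H_2(x,y)=(D_1x,\,-K'_1x)\colon V'_1\oplus V'_3\to V_1\oplus V'_2$, $H'_2=0$, and $H_l=H'_l=0$ for $l\ge3$, the top complex $(K_l)$ and the bottom complex $(K'_l)$ are equivalent up to homotopy.
   Context: For a linear differential operator $K$, a differential operator $L$ with $L\circ K=0$ is a compatibility operator for $K$; it is complete if every differential operator $L'$ with $L'\circ K=0$ factors as $L'=L''\circ L$ for some differential operator $L''$. A complex of differential operators $K_l$, $l=0,1,\ldots$, is a (full) compatibility complex for $K$ if $K_0=K$ and each $K_l$ ($l\ge1$) is a complete compatibility operator for $K_{l-1}$. Given complexes $(K_l)$ and $(K'_l)$ (with $K_{-1}=K'_{-1}=H_{-1}=H'_{-1}=0$), an equivalence up to homotopy consists of maps $C_l$ (top to bottom) and $D_l$ (bottom to top) that are cochain maps ($K'_l C_l=C_{l+1}K_l$, $K_lD_l=D_{l+1}K'_l$) together with maps $H_l$ (from degree $l+1$ to degree $l$ of the top complex) and $H'_l$ (same for the bottom complex) such that $D_lC_l=\mathrm{id}-K_{l-1}H_{l-1}-H_lK_l$ and $C_lD_l=\mathrm{id}-K'_{l-1}H'_{l-1}-H'_lK'_l$ for all $l$. *)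

(* Defs.v *)
(* Abstract setting: the category whose objects are vector
   bundles and whose morphisms are (linear) differential operators is a
   preadditive category (morphisms form abelian groups, composition is
   bilinear) with biproducts (direct sums of bundles). The statement only
   uses this structure, so we state it for an arbitrary such category. *)
From mathcomp Require Import all_boot all_order all_algebra.
Set Implicit Arguments. Unset Strict Implicit. Unset Printing Implicit Defensive.
Import GRing.Theory.
Local Open Scope ring_scope.

Record addCat := AddCat {
  Obj :> Type;
  Mor : Obj -> Obj -> zmodType;
  comp : forall A B C : Obj, Mor B C -> Mor A B -> Mor A C;
  idm : forall A : Obj, Mor A A;
  compA : forall A B C D (h : Mor C D) (g : Mor B C) (f : Mor A B),
      comp h (comp g f) = comp (comp h g) f;
  comp1m : forall A B (f : Mor A B), comp (idm B) f = f;
  compm1 : forall A B (f : Mor A B), comp f (idm A) = f;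
  compDl : forall A B C (g1 g2 : Mor B C) (f : Mor A B),
      comp (g1 + g2) f = comp g1 f + comp g2 f;
  compDr : forall A B C (g : Mor B C) (f1 f2 : Mor A B),
      comp g (f1 + f2) = comp g f1 + comp g f2;
  oplus : Obj -> Obj -> Obj;
  inl : forall A B, Mor A (oplus A B);
  inr : forall A B, Mor B (oplus A B);
  pl : forall A B, Mor (oplus A B) A;
  pr : forall A B, Mor (oplus A B) B;
  pl_inl : forall A B, comp (pl A B) (inl A B) = idm A;
  pr_inr : forall A B, comp (pr A B) (inr A B) = idm B;
  pl_inr : forall A B, comp (pl A B) (inr A B) = 0;
  pr_inl : forall A B, comp (pr A B) (inl A B) = 0;
  inlpl_inrpr : forall A B,
      comp (inl A B) (pl A B) + comp (inr A B) (pr A B) = idm (oplus A B)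
}.

Arguments comp {_ A B C}.
Arguments idm {_ A}.
Arguments inl {_ A B}.
Arguments inr {_ A B}.
Arguments pl {_ A B}.
Arguments pr {_ A B}.
Notation "g ⊚ f" := (comp g f) (at level 40, left associativity).

Section Defs.
Variable Cat : addCat.

Definition compat_op {A B E : Cat} (L : Mor B E) (K : Mor A B) : Prop :=
  L ⊚ K = 0.

Definition complete_compat {A B E : Cat} (L : Mor B E) (K : Mor A B) : Prop :=
  compat_op L K /\
  forall (F : Cat) (L' : Mor B F), L' ⊚ K = 0 -> exists L'' : Mor E F, L' = L'' ⊚ L.

Definition full_compat_complex (X : nat -> Cat) (K : forall l, Mor (X l) (X l.+1))
  (K0 : Mor (X 0) (X 1)) : Prop :=
  K 0 = K0 /\ forall l, complete_compat (K l.+1) (K l).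

(* K_{l-1} H_{l-1}, with the convention K_{-1} = H_{-1} = 0 *)
Definition KHprev (X : nat -> Cat) (K : forall l, Mor (X l) (X l.+1))
  (H : forall l, Mor (X l.+1) (X l)) (l : nat) : Mor (X l) (X l) :=
  match l return Mor (X l) (X l) with
  | 0 => 0
  | n.+1 => K n ⊚ H n
  end.

Definition homotopy_equiv (X Y : nat -> Cat)
  (K : forall l, Mor (X l) (X l.+1)) (K' : forall l, Mor (Y l) (Y l.+1))
  (C : forall l, Mor (X l) (Y l)) (D : forall l, Mor (Y l) (X l))
  (H : forall l, Mor (X l.+1) (X l)) (H' : forall l, Mor (Y l.+1) (Y l)) : Prop :=
  (forall l, K' l ⊚ C l = C l.+1 ⊚ K l) /\
  (forall l, K l ⊚ D l = D l.+1 ⊚ K' l) /\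
  (forall l, D l ⊚ C l = idm - KHprev K H l - H l ⊚ K l) /\
  (forall l, C l ⊚ D l = idm - KHprev K' H' l - H' l ⊚ K' l).

Variables (V' : nat -> Cat) (V1 : Cat).
(* V_0 is V' 0 (the source of K'_0). *)
Definition Wobj (l : nat) : Cat :=
  match l with
  | 0 => V' 0
  | 1 => V1
  | 2 => oplus V1 (V' 2)
  | 3 => oplus (V' 1) (V' 3)
  | n.+4 => V' n.+4
  end.

Variables (K' : forall l, Mor (V' l) (V' l.+1)) (K0 : Mor (V' 0) V1)
  (C1 : Mor V1 (V' 1)) (D1 : Mor (V' 1) V1) (H1' : Mor (V' 2) (V' 1)).

Definition Ktop (l : nat) : Mor (Wobj l) (Wobj l.+1) :=
  match l return Mor (Wobj l) (Wobj l.+1) with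
  | 0 => K0
  | 1 => inl ⊚ (idm - D1 ⊚ C1) + inr ⊚ (K' 1 ⊚ C1)
  | 2 => inl ⊚ (C1 ⊚ pl - H1' ⊚ pr) + inr ⊚ (K' 2 ⊚ pr)
  | 3 => K' 3 ⊚ pr
  | n.+4 => K' n.+4
  end.

Definition Cmap (l : nat) : Mor (Wobj l) (V' l) :=
  match l return Mor (Wobj l) (V' l) with
  | 0 => idm
  | 1 => C1
  | 2 => pr
  | 3 => pr
  | n.+4 => idm
  end.

Definition Dmap (l : nat) : Mor (V' l) (Wobj l) :=
  match l return Mor (V' l) (Wobj l) with
  | 0 => idm
  | 1 => D1
  | 2 => inl ⊚ (D1 ⊚ H1') + inr ⊚ (idm - K' 1 ⊚ H1')
  | 3 => inr
  | n.+4 => idm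
  end.

Definition Hmap (l : nat) : Mor (Wobj l.+1) (Wobj l) :=
  match l return Mor (Wobj l.+1) (Wobj l) with
  | 0 => 0
  | 1 => pl
  | 2 => inl ⊚ (D1 ⊚ pl) - inr ⊚ (K' 1 ⊚ pl)
  | n.+3 => 0
  end.

Definition H'map (l : nat) : Mor (V' l.+1) (V' l) :=
  match l return Mor (V' l.+1) (V' l) with
  | 1 => H1'
  | _ => 0
  end.

End Defs.

(* Main.v *)
Require Import Defs.
From mathcomp Require Import all_boot all_order all_algebra.
Import GRing.Theory.
Local Open Scope ring_scope.
Inductive zex := ZAtom of nat | ZZero | ZAdd of zex & zex | ZOpp of zex.
Fixpoint zeval {V : zmodType} (env : seq V) e : V :=
  match e with ZAtom n => nth 0 env n | ZZero => 0 | ZAdd a b => zeval env a + zeval env b | ZOpp a => - zeval env a end.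
Fixpoint zcoef e (i : nat) : int :=
  match e with ZAtom n => (n == i)%:Z | ZZero => 0 | ZAdd a b => zcoef a i + zcoef b i | ZOpp a => - zcoef a i end.
Lemma zeval_sum (V : zmodType) (env : seq V) e :
  zeval env e = \sum_(0 <= i < size env) env`_i *~ zcoef e i.
Proof.
elim: e => [n||a iha b ihb|a iha] /=.
- case: (ltnP n (size env)) => hn.
    rewrite (@big_cat_nat _ _ _ n 0 (size env) _ _ (leq0n n) (ltnW hn)) /= big_nat_cond big1 ?add0r; last first.
      by move=> i /andP[/andP[_ hi] _]; rewrite (gtn_eqF hi) mulr0z.
    rewrite big_ltn // eqxx mulr1z big_nat_cond big1 ?addr0 // => i /andP[/andP[hi _] _].
    by rewrite (ltn_eqF hi) mulr0z.
  rewrite nth_default // big_nat_cond big1 // => i /andP[/andP[_ hi] _].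
  by rewrite (gtn_eqF (leq_trans hi hn)) mulr0z.
- by rewrite big1 // => i _; rewrite mulr0z.
- by rewrite iha ihb -big_split /=; apply: eq_bigr => i _; rewrite mulrzDr.
- by rewrite iha -sumrN; apply: eq_bigr => i _; rewrite mulrNz.
Qed.
Lemma zex_sound (V : zmodType) (env : seq V) e1 e2 :
  all (fun i => zcoef e1 i == zcoef e2 i) (iota 0 (size env)) ->
  zeval env e1 = zeval env e2.
Proof.
move/allP=> h; rewrite !zeval_sum big_nat_cond [RHS]big_nat_cond; apply: eq_bigr => i /andP[hi _].
by rewrite (eqP (h i _)) // mem_iota.
Qed.

Ltac zfind x env n :=
  match env with
  | nil => constr:(@None nat)
  | cons ?y ?r =>
      let b := constr:(ltac:(first [unify x y; exact true | exact false]) : bool) in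
      match b with true => constr:(Some n) | _ => zfind x r (S n) end
  end.
Ltac zquote t env :=
  match t with
  | 0 => constr:((ZZero, env))
  | ?a + ?b =>
      let r1 := zquote a env in
      match r1 with (?ea, ?env1) =>
        let r2 := zquote b env1 in
        match r2 with (?eb, ?env2) => constr:((ZAdd ea eb, env2)) end end
  | - ?a =>
      let r1 := zquote a env in
      match r1 with (?ea, ?env1) => constr:((ZOpp ea, env1)) end
  | _ =>
      let o := zfind t env 0%N in
      match o with
      | Some ?n => constr:((ZAtom n, env))
      | None => let n := eval compute in (size env) in
                let env' := eval cbv [cat] in (env ++ [:: t]) in
                constr:((ZAtom n, env'))
      end
  end.
Ltac zmod_eq :=
  match goal with |- @eq ?T ?l ?r =>
    let r1 := zquote l (@nil T) in
    match r1 with (?e1, ?env1) =>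
      let r2 := zquote r env1 in
      match r2 with (?e2, ?env2) =>
        change (zeval env2 e1 = zeval env2 e2); apply: zex_sound; by []
      end end end.

Section S.
Variable Cat : addCat.
Implicit Types A B C : Cat.
Lemma comp0m A B C (f : Mor A B) : (0 : Mor B C) ⊚ f = 0.
Proof. have := compDl (0 : Mor B C) 0 f; rewrite addr0 -{1}[0 ⊚ f]addr0 => /addrI //. Qed.
Lemma compm0 A B C (f : Mor B C) : f ⊚ (0 : Mor A B) = 0.
Proof. have := compDr f (0 : Mor A B) 0; rewrite addr0 -{1}[f ⊚ 0]addr0 => /addrI //. Qed.
Lemma compNm A B C (g : Mor B C) (f : Mor A B) : (- g) ⊚ f = - (g ⊚ f).
Proof. by apply/eqP; rewrite -addr_eq0 -compDl addNr comp0m. Qed.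
Lemma compmN A B C (g : Mor B C) (f : Mor A B) : g ⊚ (- f) = - (g ⊚ f).
Proof. by apply/eqP; rewrite -addr_eq0 -compDr addNr compm0. Qed.
Lemma compBm A B C (g1 g2 : Mor B C) (f : Mor A B) : (g1 - g2) ⊚ f = g1 ⊚ f - g2 ⊚ f.
Proof. by rewrite compDl compNm. Qed.
Lemma compmB A B C (g : Mor B C) (f1 f2 : Mor A B) : g ⊚ (f1 - f2) = g ⊚ f1 - g ⊚ f2.
Proof. by rewrite compDr compmN. Qed.
Lemma pl_inlK A B C (f : Mor C A) : pl ⊚ (@inl _ A B ⊚ f) = f. Proof. by rewrite Defs.compA pl_inl comp1m. Qed.
Lemma pr_inrK A B C (f : Mor C B) : pr ⊚ (@inr _ A B ⊚ f) = f. Proof. by rewrite Defs.compA pr_inr comp1m. Qed.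
Lemma pl_inrK A B C (f : Mor C B) : pl ⊚ (@inr _ A B ⊚ f) = 0. Proof. by rewrite Defs.compA pl_inr comp0m. Qed.
Lemma pr_inlK A B C (f : Mor C A) : pr ⊚ (@inl _ A B ⊚ f) = 0. Proof. by rewrite Defs.compA pr_inl comp0m. Qed.
End S.
Ltac norm := repeat progress rewrite ?compDl ?compDr ?compBm ?compmB ?compNm ?compmN ?comp0m ?compm0 ?comp1m ?compm1 -?Defs.compA ?pl_inl ?pr_inr ?pl_inr ?pr_inl ?pl_inlK ?pr_inrK ?pl_inrK ?pr_inlK ?subr0 ?sub0r ?addr0 ?add0r ?opprK.

Ltac zfrom h := apply/eqP; rewrite -subr_eq0;
  first [ apply/eqP; rewrite -h; zmod_eq
        | rewrite -oppr_eq0; apply/eqP; rewrite -h; zmod_eq ].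
Theorem lemma5p2 (Cat : addCat) (V' : nat -> Cat) (V1 : Cat)
  (K' : forall l, Mor (V' l) (V' l.+1)) (K0 : Mor (V' 0) V1)
  (C1 : Mor V1 (V' 1)) (D1 : Mor (V' 1) V1) (H1' : Mor (V' 2) (V' 1)) :
  @full_compat_complex Cat V' K' (K' 0) ->
  C1 ⊚ K0 = K' 0 ->
  D1 ⊚ K' 0 = K0 ->
  idm - C1 ⊚ D1 = H1' ⊚ K' 1 ->
  full_compat_complex (@Ktop Cat V' V1 K' K0 C1 D1 H1') K0 /\
  homotopy_equiv (@Ktop Cat V' V1 K' K0 C1 D1 H1') K'
    (@Cmap Cat V' V1 C1) (@Dmap Cat V' V1 K' D1 H1') (@Hmap Cat V' V1 K' D1)
    (@H'map Cat V' H1').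
Proof.
move=> [_ cK'] hCK hDK hH0.
have hH : idm - C1 ⊚ D1 = H1' ⊚ K' 1%N := hH0.
have KK l : K' l.+1 ⊚ K' l = 0 by case: (cK' l).
have KKr l A (f : Mor A _) : K' l.+1 ⊚ (K' l ⊚ f) = 0 by rewrite Defs.compA KK comp0m.
have hCD : C1 ⊚ D1 = idm - H1' ⊚ K' 1%N by rewrite -hH opprB addrC subrK.
have hCDr A (f : Mor A _) : C1 ⊚ (D1 ⊚ f) = f - H1' ⊚ (K' 1%N ⊚ f) by rewrite Defs.compA hCD compBm comp1m Defs.compA.
have hHr A (f : Mor A _) : H1' ⊚ (K' 1%N ⊚ f) = f - C1 ⊚ (D1 ⊚ f).
  by rewrite [LHS]Defs.compA -hH compBm comp1m Defs.compA.
split.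
  split=> //; case=> [|[|[|[|n]]]].
  - split; first by rewrite /compat_op /=; norm; rewrite hCK hDK KK; norm; zmod_eq.
    move=> F L' /= hL.
    have hLD : L' ⊚ D1 ⊚ K' 0%N = 0 by rewrite -Defs.compA hDK.
    have [M hM] := (cK' 0%N).2 F (L' ⊚ D1) hLD.
    have hMr A (f : Mor A _) : L' ⊚ (D1 ⊚ f) = M ⊚ (K' 1%N ⊚ f) by move: (congr1 (fun g => g ⊚ f) hM); rewrite -!Defs.compA.
    exists (L' ⊚ pl + M ⊚ pr); norm; rewrite hMr; zmod_eq.
  - split; first by rewrite /compat_op /=; norm; rewrite ?hCDr; norm; rewrite ?KKr; norm; zmod_eq.
    move=> F L' /= hL.
    have h0r A (f : Mor A V1) : L' ⊚ (inl ⊚ (D1 ⊚ (C1 ⊚ f))) = L' ⊚ (inl ⊚ f) + L' ⊚ (inr ⊚ (K' 1%N ⊚ (C1 ⊚ f))).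
      move: (congr1 (fun g => g ⊚ f) hL); norm => h.
      zfrom h.
    pose x := L' ⊚ (inl ⊚ D1) - L' ⊚ (inr ⊚ K' 1%N).
    have hy0 : (L' ⊚ inr + x ⊚ H1') ⊚ K' 1%N = 0.
      rewrite /x; norm; rewrite ?hHr -?hH; norm; rewrite h0r; norm; zmod_eq.
    have [y hy] := (cK' 1%N).2 F _ hy0.
    have hyr A (f : Mor A _) : y ⊚ (K' 2 ⊚ f) = L' ⊚ (inr ⊚ f) + x ⊚ (H1' ⊚ f).
      by move: (congr1 (fun g => g ⊚ f) hy); norm => <-.
    exists (x ⊚ pl + y ⊚ pr).
    rewrite -{1}(compm1 L') -inlpl_inrpr; norm; rewrite hyr /x; norm; rewrite h0r; norm; zmod_eq.
  - split; first by rewrite /compat_op /=; norm; rewrite ?KKr; norm.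
    move=> F L' /= hL.
    have ha1r A (f : Mor A _) : L' ⊚ (inl ⊚ (C1 ⊚ f)) = 0.
      by move: (congr1 (fun g => g ⊚ (inl ⊚ f)) hL); norm.
    have ha2r A (f : Mor A _) : L' ⊚ (inr ⊚ (K' 2 ⊚ f)) = L' ⊚ (inl ⊚ (H1' ⊚ f)).
      move: (congr1 (fun g => g ⊚ (inr ⊚ f)) hL); norm => h.
      zfrom h.
    have e1 : idm = C1 ⊚ D1 + H1' ⊚ K' 1%N by rewrite -hH addrC subrK.
    have haR A (f : Mor A _) : L' ⊚ (inl ⊚ f) = 0.
      rewrite -(comp1m f) e1; norm; rewrite ha1r -ha2r KKr; norm; done.
    have hb0 : L' ⊚ inr ⊚ K' 2 = 0 by have := ha2r _ idm; rewrite !compm1 -Defs.compA => ->; exact: haR.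
    have [L'' hL''] := (cK' 2).2 F _ hb0.
    have hbR A (f : Mor A _) : L' ⊚ (inr ⊚ f) = L'' ⊚ (K' 3 ⊚ f).
      by move: (congr1 (fun g => g ⊚ f) hL''); norm.
    exists L''.
    rewrite -{1}(compm1 L') -inlpl_inrpr; norm; rewrite haR hbR; norm; done.
  - split; first by rewrite /compat_op /=; norm; rewrite ?KKr; norm.
    move=> F L' /= hL.
    have h3 : L' ⊚ K' 3 = 0 by move: (congr1 (fun g => g ⊚ inr) hL); norm.
    exact: (cK' 3).2 F L' h3.
  - exact: (cK' n.+4).
split; [|split; [|split]].
- case=> [|[|[|[|n]]]] /=; norm; rewrite ?hCDr ?hCD; norm; rewrite ?KKr; norm; (try done); (try zmod_eq); (try (rewrite -inlpl_inrpr; norm; zmod_eq)).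
- case=> [|[|[|[|n]]]] /=; norm; rewrite ?hCDr ?hCD; norm; rewrite ?KKr; norm; (try done); (try zmod_eq); (try (rewrite -inlpl_inrpr; norm; zmod_eq)).
- case=> [|[|[|[|n]]]] /=; norm; rewrite ?hCDr ?hCD; norm; rewrite ?KKr; norm; (try done); (try zmod_eq); (try (rewrite -inlpl_inrpr; norm; zmod_eq)).
- case=> [|[|[|[|n]]]] /=; norm; (try done); (try zmod_eq); (try (rewrite -inlpl_inrpr; norm; zmod_eq)).
Qed.
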